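(* Let $T[n]$ be a standard Young tableau with exactly two rows, and let $T$ denote its second row, with entries $t_1<t_2<\dots<t_m$. Then during one promotion step applied to $T[n]$, the $k$-th entry $t_k$ of $T$ slides from the second row into the top row if and only if $t_k=2k$ and there is no $i<k$ with $t_i=2i$.
   Context: For a tableau $T$ with distinct positive entries, $T[n]$ is obtained by placing above $T$ a top row consisting of all elements of $\{1,\dots,n\}$ not in $T$, in increasing order. Promotion of a tableau with distinct entries $i_1<\dots<i_m$: (1) remove the top-left entry, leaving an empty box; (2) while the empty box has a box to its right or below, slide into it the smaller of the entries of those boxes (jeu-de-taquin slides); (3) then replace each remaining entry $i_k$ by $i_{k-1}$; (4) place $i_m$ in the empty box. ''Slides into the top row'' refers to a slide in step (2) moving an entry from the second row up into the first row. *)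

(* Defs.v *)
From mathcomp Require Import all_boot.
Set Implicit Arguments. Unset Strict Implicit. Unset Printing Implicit Defensive.

(* A tableau is a list of rows (row 0 = top row), each a list of entries
   read left to right. *)
Definition tableau := seq (seq nat).

Definition entry (t : tableau) (r c : nat) : option nat :=
  let row := nth [::] t r in
  if c < size row then Some (nth 0 row c) else None.

Definition is_SYT (t : tableau) : Prop :=
  [/\ all (fun row => 0 < size row) t,
      sorted geq (map size t),
      all (sorted ltn) t,
      (forall r c, c < size (nth [::] t r.+1) ->
         nth 0 (nth [::] t r) c < nth 0 (nth [::] t r.+1) c)
    & perm_eq (flatten t) (iota 1 (size (flatten t)))].

(* T[n]: place above T (a single row here) the row of all elements of
   {1..n} not in T, in increasing order. *)
Definition Tn (n : nat) (T : seq nat) : tableau :=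
  [:: [seq i <- iota 1 n | i \notin T]; T].

(* Step (2) of promotion: jeu-de-taquin slides of the empty box, starting
   at position (r, c).  The result is the list of slides performed, each
   recorded as (entry moved, row it comes from, row it moves into).  Boxes ahead of the empty box (to its
   right / below) have not been touched by earlier slides, so reading them
   from the original tableau is correct.  [fuel] bounds the number of
   slides (the number of boxes suffices). *)
Fixpoint slides (fuel : nat) (t : tableau) (r c : nat)
  : seq (nat * nat * nat) :=
  match fuel with
  | 0 => [::]
  | fuel'.+1 =>
    match entry t r c.+1, entry t r.+1 c with
    | None, None => [::]
    | Some x, None => (x, r, r) :: slides fuel' t r c.+1
    | None, Some y => (y, r.+1, r) :: slides fuel' t r.+1 c
    | Some x, Some y =>
        if x < y then (x, r, r) :: slides fuel' t r c.+1
        else (y, r.+1, r) :: slides fuel' t r.+1 c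
    end
  end.

(* The slides performed during one promotion step of T[n]: the top-left
   entry is removed (step (1)), leaving the empty box at (0,0). *)
Definition promotion_slides (n : nat) (T : seq nat) : seq (nat * nat * nat) :=
  slides (size (flatten (Tn n T))) (Tn n T) 0 0.

Definition slides_into_top_row (n : nat) (T : seq nat) (x : nat) : Prop :=
  (x, 1, 0) \in promotion_slides n T.

(* Main.v *)
Require Import Defs.
From mathcomp Require Import all_boot.
From mathcomp Require Import zify.
Set Implicit Arguments. Unset Strict Implicit. Unset Printing Implicit Defensive.

Lemma sorted_count_lt (s : seq nat) v : sorted ltn s ->
  forall i, i < size s -> (nth 0 s i < v) = (i < count (fun x => x < v) s).
Proof.
elim: s => [//|x s IH] /= Hs.
have Hs' := path_sorted Hs.
have Hall : all (fun y => x < y) s.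
  by move: Hs; rewrite (path_sortedE ltn_trans) => /andP[].
have C0 : v <= x -> count (fun y => y < v) s = 0.
  move=> Hvx; apply/eqP; rewrite -leqn0 leqNgt -has_count; apply/hasPn => y Hy /=.
  by rewrite -leqNgt; apply: leq_trans Hvx (ltnW (allP Hall y Hy)).
case=> [_|i] /=.
  by case: ltnP => // Hvx; rewrite C0.
move=> Hi; case: (ltnP x v) => Hxv.
  by rewrite add1n ltnS IH.
rewrite C0 // add0n /=; apply/negbTE; rewrite -leqNgt.
apply: leq_trans Hxv (ltnW (allP Hall _ (mem_nth 0 Hi))).
Qed.

Lemma count_iota_lt v m N : count (fun x => x < v) (iota m N) = minn N (v - m).
Proof.
elim: N m => [|N IH] m /=; first by rewrite min0n.
rewrite IH; case: ltnP => H /=; lia.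
Qed.

Definition P (A T : seq nat) c := (c.+1 < size A) && (nth 0 A c.+1 < nth 0 T c).

Lemma key (A T : seq nat) c : sorted ltn A -> sorted ltn T ->
  perm_eq (A ++ T) (iota 1 (size (A ++ T))) -> c < size T -> c < size A ->
  nth 0 A c < nth 0 T c -> P A T c = (nth 0 T c != 2 * c.+1).
Proof.
move=> sA sT pAT cT cA Hlt; rewrite /P.
set v := nth 0 T c.
have vin : v \in iota 1 (size (A ++ T)).
  by rewrite -(perm_mem pAT) mem_cat (mem_nth 0 cT) orbT.
rewrite mem_iota in vin.
have Cnt : count (fun x : nat => x < v) (A ++ T) = count (fun x : nat => x < v) (iota 1 (size (A ++ T))) by apply/permP.
rewrite count_cat count_iota_lt in Cnt.
have cTc : count (fun x => x < v) T = c.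
  apply/eqP; rewrite eqn_leq; apply/andP; split.
    by rewrite leqNgt -(sorted_count_lt _ sT) // ltnn.
  case: c cT cA Hlt @v vin Cnt => // c cT cA Hlt v vin Cnt.
  rewrite -(sorted_count_lt _ sT) ?(ltnW cT) //.
  by apply: (sorted_ltn_nth ltn_trans 0 sT) => //; rewrite inE ?(ltnW cT).
have cAc : c < count (fun x => x < v) A by rewrite -(sorted_count_lt _ sA).
have sAc := count_size (fun x => x < v) A.
rewrite size_cat in vin Cnt.
case: (ltnP c.+1 (size A)) => H /=.
  rewrite (sorted_count_lt _ sA) //.
  apply/idP/idP => [H1|H1]; first (apply/eqP => E; lia).
  move/eqP: H1 => H1; lia.
apply/esym/negbTE; rewrite negbK; apply/eqP; lia.
Qed.

Lemma slides_row1 fuel (A T : seq nat) c x :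
  (x, 1, 0) \notin slides fuel [:: A; T] 1 c.
Proof.
elim: fuel c => [//|f IH] c /=; rewrite /entry /=.
by case: ifP => _ //; rewrite in_cons (negbTE (IH _)) orbF !xpair_eqE andbF.
Qed.

Lemma slides_row0_out fuel (A T : seq nat) c x : size T <= c ->
  (x, 1, 0) \notin slides fuel [:: A; T] 0 c.
Proof.
elim: fuel c => [//|f IH] c Hc /=; rewrite /entry /=.
have -> : (c < size T) = false by rewrite ltnNge Hc.
case: ifP => _ //; rewrite in_cons (negbTE (IH _ _)) ?orbF ?xpair_eqE ?andbF //; exact: leqW.
Qed.

Lemma slides_row0 fuel (A T : seq nat) c x : size T <= c + fuel ->
  (x, 1, 0) \in slides fuel [:: A; T] 0 c <->
  exists2 d, c <= d < size T &
    [/\ forall i, c <= i < d -> P A T i, ~~ P A T d & x = nth 0 T d].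
Proof.
elim: fuel c => [|f IH] c Hf.
  rewrite addn0 in Hf; split => //= -[d /andP[H1 H2] _]; lia.
case: (ltnP c (size T)) => Hc; last first.
  rewrite (negbTE (slides_row0_out f.+1 A x Hc)); split => // -[d /andP[H1 H2] _]; lia.
have HP : P A T c = (c.+1 < size A) && (nth 0 A c.+1 < nth 0 T c) by [].
rewrite /= /entry /= Hc.
case E: (c.+1 < size A) HP => HP.
  case: ifP => Hlt.
    rewrite in_cons !xpair_eqE andbF andFb orFb.
    apply: iff_trans (IH _ _) _; first by rewrite addSnnS.
    split.
      case=> d /andP[H1 H2] [H3 H4 H5]; exists d; first by rewrite ltnW.
      split => // i /andP[Hi1 Hi2].
      case: (ltnP c i) => Hci; first by apply: H3; rewrite Hci.
      have -> : i = c by lia.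
      by rewrite HP Hlt.
    case=> d /andP[H1 H2] [H3 H4 H5].
    have Hcd : c < d.
      rewrite ltn_neqAle H1 andbT; apply/eqP => Ecd; subst d.
      by rewrite HP Hlt in H4.
    exists d; first by rewrite Hcd.
    split => // i /andP[Hi1 Hi2]; apply: H3; rewrite Hi2 andbT; exact: ltnW.
  all: rewrite in_cons (negbTE (slides_row1 _ _ _ _ _)) orbF !xpair_eqE /= !andbT.
  all: split => [/eqP ->|[d /andP[H1 H2] [H3 H4 H5]]].
  all: try (exists c; [by rewrite leqnn Hc | split => //; [move=> i; lia | by rewrite HP ?Hlt]]).
  all: have Ecd : d = c by (case: (ltnP c d) => Hcd; [ have := H3 c; rewrite leqnn Hcd HP ?Hlt => /(_ isT) // | lia]).
  all: by subst d; rewrite H5.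
Qed.

Theorem lemma4p3 (n : nat) (T : seq nat) :
  is_SYT (Tn n T) ->
  forall k, 1 <= k <= size T ->
    (slides_into_top_row n T (nth 0 T k.-1) <->
     (nth 0 T k.-1 = 2 * k /\
      ~ (exists i, 1 <= i < k /\ nth 0 T i.-1 = 2 * i))).
Proof.
rewrite /is_SYT /slides_into_top_row /promotion_slides /Tn.
set A := [seq i <- iota 1 n | i \notin T].
case=> _ /= /andP[sz _] /and3P[sA sT _] col pAT.
rewrite cats0 in pAT.
have colc : forall c, c < size T -> nth 0 A c < nth 0 T c by move=> c; apply: (col 0).
have uT : uniq T := sorted_uniq ltn_trans ltnn sT.
have keyT : forall d, d < size T -> P A T d = (nth 0 T d != 2 * d.+1).
  move=> d Hd; apply: key => //; [exact: leq_trans Hd sz | exact: colc].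
case=> [//|c] /= Hk.
rewrite slides_row0 /=; last by rewrite cats0 size_cat leq_addl.
have Hc : c < size T by [].
split.
  case=> d Hd [H3 H4 H5].
  move/eqP: H5; rewrite nth_uniq // => /eqP Ecd; subst d.
  rewrite keyT // negbK in H4; split; first exact/eqP.
  case=> i [/andP[Hi1 Hi2] Ei].
  have Hi : i.-1 < c by lia.
  have := H3 i.-1 Hi; rewrite keyT; last by lia.
  have -> : i.-1.+1 = i by lia.
  by rewrite Ei eqxx.
case=> E1 E2; exists c => //.
split => //; last by rewrite keyT // E1 eqxx.
move=> i Hi; rewrite keyT; last by lia.
apply/eqP => Ei; apply: E2; exists i.+1; split; first by lia.
by [].
Qed.
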